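(* Let $Q$ be a quiver with no oriented cycles, $\theta\in\mathbb{Z}^{Q_0}$, and $\alpha_1\ne\alpha_2\in Q_1$ arrows with $\alpha_1^-=\alpha_2^-$, $\alpha_1^+=\alpha_2^+$; let $Q'$, $F$, $F'$, $\varphi$, $\varphi'$, $\pi$ be as in the context. If $u,v\in F$ are monomials with $\varphi(u)=\varphi(v)$ and $\pi(u)=\pi(v)$, then $u-v$ lies in the ideal $J$ of $F$ generated by $\mathcal{G}_2=\{t_mt_n-t_{m+\varepsilon_2-\varepsilon_1}t_{n+\varepsilon_1-\varepsilon_2}\mid m,n\in\nabla(Q,\theta)\cap\mathbb{Z}^{Q_1},\ m(\alpha_1)>0,\ n(\alpha_2)>0\}$, where $\varepsilon_i\in\mathbb{Z}^{Q_1}$ is the characteristic function of $\alpha_i$.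
   Context: For a quiver $Q$ (vertices $Q_0$, arrows $Q_1$, $a$ from $a^-$ to $a^+$) and $\theta\in\mathbb{Z}^{Q_0}$, $\nabla(Q,\theta)=\{x\in\mathbb{R}_{\ge0}^{Q_1}\mid\forall v:\ \theta(v)=\sum_{a^+=v}x(a)-\sum_{a^-=v}x(a)\}$. $x^m=\prod_ax(a)^{m(a)}$ in $\mathbb{C}[x(a)\mid a\in Q_1]$; $\mathcal{A}(Q,\theta)$ is the subalgebra generated by $x^m$ for $m\in\nabla(Q,\theta)\cap\mathbb{Z}^{Q_1}$; $F=\mathbb{C}[t_m\mid m\in\nabla(Q,\theta)\cap\mathbb{Z}^{Q_1}]$ and $\varphi:F\to\mathcal{A}(Q,\theta)$, $t_m\mapsto x^m$. $Q'$ is obtained from $Q$ by collapsing $\alpha_1,\alpha_2$ to one arrow $\alpha$; $F'$, $\varphi'$ are defined analogously for $(Q',\theta)$. $\pi:\mathbb{Z}^{Q_1}\to\mathbb{Z}^{Q'_1}$ is $\pi(m)(\alpha)=m(\alpha_1)+m(\alpha_2)$, $\pi(m)(\beta)=m(\beta)$ for other arrows; it maps $\nabla(Q,\theta)\cap\mathbb{Z}^{Q_1}$ to $\nabla(Q',\theta)\cap\mathbb{Z}^{Q'_1}$, and $\pi:F\to F'$ is the algebra map $t_m\mapsto t_{\pi(m)}$. *)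

(* Defs.v *)
(* multinomials' monoid algebras {malg R[{cmonom I}]} serve as
   polynomial rings in (possibly non-finitely-enumerated) variables indexed
   by a choiceType I. *)
From HB Require Import structures.
From mathcomp Require Import all_boot all_order all_algebra.
From mathcomp Require Import finmap.
From mathcomp Require Import monalg.
From mathcomp Require Import Rstruct complex.
From Stdlib Require Rdefinitions.

Set Implicit Arguments.
Unset Strict Implicit.
Unset Printing Implicit Defensive.

Import Order.TTheory GRing.Theory Num.Theory.
Local Open Scope ring_scope.

Definition CC : fieldType := (Rdefinitions.R)[i].

Section Quiver.
Variables (V A : finType) (src tgt : A -> V).
(* src a = a^-, tgt a = a^+ *)

Definition no_oriented_cycles : Prop :=
  forall (a : A) (p : seq A),
    ~~ (path (fun b c => tgt b == src c) a p && (tgt (last a p) == src a)).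

Definition in_nabla (theta : V -> int) (m : {ffun A -> nat}) : bool :=
  [forall v : V, theta v ==
     (\sum_(a | tgt a == v) (m a)%:Z - \sum_(a | src a == v) (m a)%:Z)].

Definition latt (theta : V -> int) := {m : {ffun A -> nat} | in_nabla theta m}.

Definition Fring (theta : V -> int) := {malg CC[{cmonom latt theta}]}.

Definition tvar (theta : V -> int) (m : latt theta) : Fring theta :=
  << ucm m >>.

Definition tmon (theta : V -> int) (u : {cmonom latt theta}) : Fring theta :=
  << u >>.

Definition Xring := {malg CC[{cmonom A}]}.

Definition xmon (m : {ffun A -> nat}) : Xring :=
  \prod_(a : A) (<< ucm a >> : Xring) ^+ (m a).

Definition phi (theta : V -> int) (f : Fring theta) : Xring :=
  mmap (fun c : CC => c%:MP) 
       (fun u : {cmonom latt theta} =>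
          \prod_(m <- finsupp u) xmon (val m) ^+ (u m)) f.

End Quiver.

(* The quiver Q' obtained by collapsing alpha1, alpha2 into one arrow alpha:
   its arrows are those of Q except alpha2, the arrow alpha1 now playing the
   role of the collapsed arrow alpha (same endpoints). *)
Section Collapse.
Variables (V A : finType) (src tgt : A -> V) (alpha1 alpha2 : A).

Definition arrQ' : finType := {a : A | a != alpha2}.
Definition srcQ' (b : arrQ') : V := src (val b).
Definition tgtQ' (b : arrQ') : V := tgt (val b).

Definition piZ (m : {ffun A -> nat}) : {ffun arrQ' -> nat} :=
  [ffun b : arrQ' => m (val b) + (if val b == alpha1 then m alpha2 else 0)%N].

Variable theta : V -> int.

Definition Fring' := Fring srcQ' tgtQ' theta.

(* pi : F -> F', the algebra map t_m |-> t_{pi(m)}.  (pi maps lattice points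
   of nabla(Q,theta) to lattice points of nabla(Q',theta) when alpha1, alpha2
   are distinct and parallel, so the fallback branch "0" is never used in
   that situation.) *)
Definition pi_var (m : latt src tgt theta) : Fring' :=
  match insub (piZ (val m)) with
  | Some m' => tvar m'
  | None => 0
  end.

Definition piF (f : Fring src tgt theta) : Fring' :=
  mmap (fun c : CC => c%:MP)
       (fun u : {cmonom latt src tgt theta} =>
          \prod_(m <- finsupp u) pi_var m ^+ (u m)) f.

Definition eps (a0 : A) (a : A) : int := (a == a0)%:Z.

Definition G2 (g : Fring src tgt theta) : Prop :=
  exists m n m' n' : latt src tgt theta,
    [/\ (0 < val m alpha1)%N, (0 < val n alpha2)%N,
        (forall a, (val m' a)%:Z = (val m a)%:Z + eps alpha2 a - eps alpha1 a),
        (forall a, (val n' a)%:Z = (val n a)%:Z + eps alpha1 a - eps alpha2 a)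
      & g = tvar m * tvar n - tvar m' * tvar n'].

End Collapse.

Definition in_ideal_gen (R : comNzRingType) (S : R -> Prop) (x : R) : Prop :=
  exists s : seq (R * R), (forall p, p \in s -> S p.2) /\
    x = \sum_(p <- s) p.1 * p.2.

(* Main.v *)
Require Import Defs.
From HB Require Import structures.
From mathcomp Require Import all_boot all_order all_algebra.
From mathcomp Require Import finmap monalg.
From mathcomp Require Import zify.
Import GRing.Theory.
Local Open Scope ring_scope.
Local Open Scope fset_scope.

Section Ideal.
Variables (R : comNzRingType) (S : R -> Prop).

Lemma I0 : in_ideal_gen S 0.
Proof. by exists [::]; split => //; rewrite big_nil. Qed.

Lemma IG g : S g -> in_ideal_gen S g.
Proof.
move=> Sg; exists [:: (1, g)]; split; first by move=> p; rewrite inE => /eqP ->.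
by rewrite big_seq1 mul1r.
Qed.

Lemma IM x y : in_ideal_gen S x -> in_ideal_gen S (y * x).
Proof.
case=> s [Hs ->]; exists (map (fun p => (y * p.1, p.2)) s); split.
  by move=> p /mapP [q qs ->] /=; apply: Hs.
by rewrite big_map mulr_sumr; apply: eq_bigr => p _; rewrite mulrA.
Qed.

Lemma IA x y : in_ideal_gen S x -> in_ideal_gen S y -> in_ideal_gen S (x + y).
Proof.
case=> s [Hs ->] [t [Ht ->]]; exists (s ++ t); split; last by rewrite big_cat.
by move=> p; rewrite mem_cat => /orP [] ?; [apply: Hs | apply: Ht].
Qed.
End Ideal.

Section Mono.
Variables (K : monomType) (R : nzRingType).

Lemma monoM (k1 k2 : K) : (<< mmul k1 k2 >> : {malg R[K]}) = << k1 >> * << k2 >>.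
Proof. by rewrite malgM_def fgmulUU mulr1. Qed.

Lemma mono1 : (<< (mone : K) >> : {malg R[K]}) = 1.
Proof. exact: mpolyC1E. Qed.

Lemma mono_inj (k1 k2 : K) : (<< k1 >> : {malg R[K]}) = << k2 >> -> k1 = k2.
Proof.
move=> /(congr1 (mcoeff k1)); rewrite !mcoeffU1 eqxx.
by case: eqP => // _ /eqP; rewrite oner_eq0.
Qed.
End Mono.

Section GW.
Variables (I : choiceType) (R : comNzRingType) (w : I -> R).
Definition gw (u : {cmonom I}) := \prod_(m <- finsupp u) w m ^+ u m.

Lemma gw_incl (u : {cmonom I}) (d : {fset I}) : finsupp u `<=` d -> gw u = \prod_(m <- d) w m ^+ u m.
Proof.
move=> sub; rewrite /gw; apply: big_fset_incl => // x _.
by rewrite -cmE_eq0 => /eqP ->; rewrite expr0.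
Qed.

Lemma gw_prod (s : seq I) :
  gw (\big[mmul/mone]_(x <- s) ucm x) = \prod_(x <- s) w x.
Proof.
elim: s => [|i s IH]; first by rewrite !big_nil /gw mdom1 big_nil.
rewrite !big_cons -IH.
set u := \big[mmul/mone]_(x <- s) ucm x.
have sub : finsupp (mmul (ucm i) u) `<=` [fset i] `|` finsupp u by rewrite mdomD mdomU.
rewrite (gw_incl _ _ sub) (gw_incl _ _ (fsubsetUr [fset i] (finsupp u))).
rewrite (eq_bigr (fun m => w m ^+ ucm i m * w m ^+ u m)); last by move=> m _; rewrite cmM exprD.
rewrite big_split /=; congr (_ * _).
rewrite (bigD1_seq i) ?fset_uniq //=; last by rewrite !inE eqxx.
rewrite cmUU expr1 big1 ?mulr1 // => m ne; rewrite cmU eq_sym (negbTE ne) expr0 //.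
Qed.
End GW.

Lemma cmonom_dec (I : choiceType) (u : {cmonom I}) :
  exists s : seq I, u = \big[mmul/mone]_(x <- s) ucm x.
Proof.
move: {2}(mdeg u) (erefl (mdeg u)) => n; elim: n u => [|n IH] u Hd.
  by exists [::]; rewrite big_nil; apply: mdeg_eq0I.
have [i iu] : exists i, i \in finsupp u.
  apply/fset0Pn; apply/eqP => E; move: Hd; rewrite mdegE E big_seq_fset0.
  by [].
pose u' := divcm u (ucm i).
have Hu : u = mmul (ucm i) u'.
  apply/eqP/cmP => j; rewrite cmM divcmE cmU.
  move: iu; rewrite -cmE_neq0; case: (i =P j) => [->|]; lia.
have : mdeg u' = n by move: Hd; rewrite Hu mdegM mdegU; lia.
case/IH => s Hs; exists (i :: s); by rewrite big_cons -Hs.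
Qed.

Lemma pairing (T1 T2 : eqType) (f : T1 -> T2) (s : seq T1) (t : seq T1) :
  perm_eq (map f s) (map f t) ->
  exists z : seq (T1 * T1), [/\ map fst z = s, perm_eq (map snd z) t &
     forall p, p \in z -> f p.1 = f p.2].
Proof.
elim: s t => [|x s IH] t /=.
  by move/perm_size; rewrite size_map; case: t => // _; exists [::].
move=> H; have : f x \in map f t by rewrite -(perm_mem H) inE eqxx.
case/mapP => y yt fxy.
have Ht := perm_to_rem yt.
have H2 : perm_eq (map f s) (map f (rem y t)).
  have := perm_map f Ht; rewrite /= -fxy => H3.
  by rewrite -(perm_cons (f x)) (perm_trans H) //.
case: (IH _ H2) => z [Hz1 Hz2 Hz3]; exists ((x, y) :: z); split => /=.
- by rewrite Hz1.
- by rewrite perm_sym (perm_trans Ht) // perm_cons perm_sym.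
- by move=> p; rewrite inE => /orP [/eqP -> //|]; apply: Hz3.
Qed.
Set Implicit Arguments.
Unset Strict Implicit.
Section Shift.
Variables (V A : finType) (src tgt : A -> V) (theta : V -> int).

Definition shiftf (f : {ffun A -> nat}) (x y : A) : {ffun A -> nat} :=
  [ffun a => if a == y then (f a).-1 else if a == x then (f a).+1 else f a].

Lemma sum_eps (P : pred A) x : \sum_(a | P a) eps x a = (P x)%:Z.
Proof.
rewrite big_mkcond (bigD1 x) //= big1 ?addr0; first by rewrite /eps eqxx; case: (P x).
by move=> a /negbTE ne; rewrite /eps ne; case: (P a).
Qed.

Lemma shiftf_int (f : {ffun A -> nat}) (x y : A) : x != y -> (0 < f y)%N ->
  forall a, (shiftf f x y a)%:Z = (f a)%:Z + eps x a - eps y a.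
Proof.
move=> xy fy a; rewrite ffunE /eps.
case: (a =P y) => [->|ay]; first by rewrite eq_sym (negbTE xy) /=; lia.
case: (a =P x) => [->|ax] /=; lia.
Qed.

Lemma nabla_shift (m m' : {ffun A -> nat}) x y :
  in_nabla src tgt theta m ->
  (forall a, (m' a)%:Z = (m a)%:Z + eps x a - eps y a) ->
  src x = src y -> tgt x = tgt y -> in_nabla src tgt theta m'.
Proof.
move=> /forallP Hm Hm' sxy txy; apply/forallP => v; move/eqP: (Hm v) ->.
rewrite !(eq_bigr _ (fun a _ => Hm' a)) !sumrB !big_split /= !sum_eps sxy txy.
by rewrite !addrK.
Qed.
End Shift.

Section Main.
Variables (V A : finType) (src tgt : A -> V) (theta : V -> int) (a1 a2 : A).
Hypotheses (Hne : a1 != a2) (Hs : src a1 = src a2) (Ht : tgt a1 = tgt a2).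
Local Notation L := (latt src tgt theta).

Definition shiftL (m : L) x y : L := insubd m (shiftf (val m) x y).

Lemma shiftL_val (m : L) x y : x != y -> (0 < val m y)%N -> src x = src y ->
  tgt x = tgt y -> val (shiftL m x y) = shiftf (val m) x y.
Proof.
move=> xy my sxy txy; rewrite /shiftL insubdK //.
apply: (nabla_shift (valP m) (shiftf_int xy my)) => //.
Qed.

Definition pz (m : L) := piZ a1 a2 (val m).

Lemma pz_a1 (m n : L) : pz m = pz n -> (val m a1 + val m a2 = val n a1 + val n a2)%N.
Proof.
move/(congr1 (fun f : {ffun arrQ' a2 -> nat} => f (exist _ a1 Hne))).
by rewrite !ffunE /= eqxx.
Qed.

Lemma pz_other (m n : L) a : pz m = pz n -> a != a1 -> forall H : a != a2, val m a = val n a.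
Proof.
move=> E aa1 aa2; move/(congr1 (fun f : {ffun arrQ' a2 -> nat} => f (exist _ a aa2))): E.
by rewrite !ffunE /= (negbTE aa1) !addr0.
Qed.

Lemma pz_eq (m n : L) : pz m = pz n -> val m a1 = val n a1 -> m = n.
Proof.
move=> E e1; apply: val_inj; apply/ffunP => a.
have := pz_a1 E.
case: (a =P a1) => [->//|/eqP aa1].
case: (a =P a2) => [->|/eqP aa2]; first lia.
by rewrite (pz_other E aa1 aa2).
Qed.

Lemma pz_shift21 (m : L) : (0 < val m a1)%N -> pz (shiftL m a2 a1) = pz m.
Proof.
move=> my; apply/ffunP => b.
rewrite !ffunE (@shiftL_val m a2 a1) ?(eq_sym a2) //.
case: b => b bn /=; rewrite /shiftf !ffunE (negbTE bn) eqxx.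
have my' : (0 < sval m a1)%N := my.
by case: (b =P a1) => [->|] /=; rewrite ?(eq_sym a2) ?(negbTE Hne); lia.
Qed.

Lemma pz_shift12 (m : L) : (0 < val m a2)%N -> pz (shiftL m a1 a2) = pz m.
Proof.
move=> my; apply/ffunP => b.
rewrite !ffunE (@shiftL_val m a1 a2) //.
case: b => b bn /=; rewrite /shiftf !ffunE (negbTE bn) eqxx.
have my' : (0 < sval m a2)%N := my.
by case: (b =P a1) => [->|] /=; lia.
Qed.

Lemma sum_le (T : eqType) (z : seq T) (f g : T -> nat) :
  (forall p, p \in z -> f p <= g p)%N -> (\sum_(p <- z) f p <= \sum_(p <- z) g p)%N.
Proof.
elim: z => [|x z IH] H; first by rewrite !big_nil.
rewrite !big_cons leq_add ?H ?inE ?eqxx //.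
by apply: IH => p pz; apply: H; rewrite inE pz orbT.
Qed.

Lemma sum_le_eq (T : eqType) (z : seq T) (f g : T -> nat) :
  (forall p, p \in z -> f p <= g p)%N -> (\sum_(p <- z) f p = \sum_(p <- z) g p)%N ->
  forall p, p \in z -> f p = g p.
Proof.
elim: z => [|x z IH] H E p //; rewrite !big_cons in E.
have Hz : (forall p, p \in z -> f p <= g p)%N.
  by move=> q qz; apply: H; rewrite inE qz orbT.
have := sum_le Hz; have := H x; rewrite inE eqxx => /(_ isT) Hx Hsl.
rewrite inE => /orP [/eqP ->|pz]; first lia.
apply: IH => //; lia.
Qed.

Lemma ex_gt_lt (T : eqType) (z : seq T) (f g : T -> nat) :
  (\sum_(p <- z) f p = \sum_(p <- z) g p)%N -> ~~ all (fun p => f p == g p) z ->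
  (exists2 p, p \in z & g p < f p)%N /\ (exists2 q, q \in z & f q < g q)%N.
Proof.
move=> Hsm Hn; split.
  apply/hasP; apply/negPn/negP => /hasPn H.
  move/negP: Hn; apply; apply/allP => p pin; apply/eqP.
  have Hle : forall x, x \in z -> (f x <= g x)%N.
    by move=> x xz; rewrite leqNgt; apply: H.
  exact: (sum_le_eq Hle Hsm pin).
apply/hasP; apply/negPn/negP => /hasPn H.
move/negP: Hn; apply; apply/allP => x pin; apply/eqP; apply/esym.
have Hle : forall y, y \in z -> (g y <= f y)%N.
  by move=> y yz; rewrite leqNgt; apply: H.
exact: (sum_le_eq Hle (esym Hsm) pin).
Qed.

Lemma perm2 (T : eqType) (z : seq T) p q : p \in z -> q \in z -> q != p ->
  perm_eq z (p :: q :: rem q (rem p z)).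
Proof.
move=> pz qz qp.
have qr : q \in rem p z.
  by move: qz; rewrite (perm_mem (perm_to_rem pz)) inE (negbTE qp).
by apply: (perm_trans (perm_to_rem pz)); rewrite perm_cons; apply: perm_to_rem.
Qed.

Definition Dz (z : seq (L * L)) :=
  (\sum_(p <- z) ((val p.1 a1 - val p.2 a1) + (val p.2 a1 - val p.1 a1)))%N.

Lemma ar1 (x1 x2 y1 y2 : nat) : (x1 < y1 -> x1 + x2 = y1 + y2 -> 0 < x2)%N.
Proof. lia. Qed.
Lemma ar2 (x y x' y' d n : nat) : (y < x -> x' < y' ->
  (x - y + (y - x)) + ((x' - y' + (y' - x')) + d) < n.+1 ->
  (x.-1 - y + (y - x.-1)) + ((x'.+1 - y' + (y' - x'.+1)) + d) < n)%N.
Proof. lia. Qed.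
Lemma ar3 (x y x' y' d e : nat) : (x + (x' + d) = y + (y' + e) -> 0 < x ->
  x.-1 + (x'.+1 + d) = y + (y' + e))%N.
Proof. lia. Qed.

Section CombG.
Variables (R : comNzRingType) (t : L -> R) (S : R -> Prop).
Hypothesis HS : forall m n m' n' : L, (0 < val m a1)%N -> (0 < val n a2)%N ->
  (forall a, (val m' a)%:Z = (val m a)%:Z + eps a2 a - eps a1 a) ->
  (forall a, (val n' a)%:Z = (val n a)%:Z + eps a1 a - eps a2 a) ->
  S (t m * t n - t m' * t n').

Lemma t1 (z : seq (L * L)) : all (fun p : L * L => val p.1 a1 == val p.2 a1) z -> forall p, p \in z -> val p.1 a1 = val p.2 a1.
Proof. by move=> /allP Hall p pz; apply/eqP/Hall. Qed.
Lemma t2 (p : L * L) (Hpz : pz p.1 = pz p.2) (E : val p.1 a1 = val p.2 a1) : t p.1 = t p.2.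
Proof. by rewrite (pz_eq Hpz E). Qed.
Lemma t3 (z : seq (L * L)) (Hpz : forall p, p \in z -> t p.1 = t p.2) : \prod_(p <- z) t p.1 = \prod_(p <- z) t p.2.
Proof. by apply: eq_big_seq. Qed.
Lemma all_case (z : seq (L * L)) (Hpz : forall p, p \in z -> pz p.1 = pz p.2) : all (fun p : L * L => val p.1 a1 == val p.2 a1) z -> \prod_(p <- z) t p.1 = \prod_(p <- z) t p.2.
Proof.
move=> H; apply: t3 => p pz'; apply: t2; first exact: Hpz.
exact: t1 H p pz'.
Qed.

Lemma comb (z : seq (L * L)) :
  (forall p, p \in z -> pz p.1 = pz p.2) ->
  (\sum_(p <- z) val p.1 a1 = \sum_(p <- z) val p.2 a1)%N ->
  in_ideal_gen S (\prod_(p <- z) t p.1 - \prod_(p <- z) t p.2).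
Proof.
have [n Hn] : exists n, (Dz z < n)%N by exists (Dz z).+1.
elim: n z Hn => [//|n IH] z Hn Hpz Hsum.
pose b := all (fun p : L * L => val p.1 a1 == val p.2 a1) z.
have Eb : b = all (fun p : L * L => val p.1 a1 == val p.2 a1) z := erefl.
clearbody b; case: b Eb => Eb.
  rewrite (all_case Hpz (esym Eb)) subrr; exact: I0.
have Hnall : ~~ all (fun p : L * L => val p.1 a1 == val p.2 a1) z by rewrite -Eb.
have [[p pz' Hp] [q qz Hq]] := ex_gt_lt Hsum Hnall.
have qp : q != p.
  apply/eqP => E; move: Hq; rewrite E => Hq'.
  have : (val p.2 a1 < val p.2 a1)%N := ltn_trans Hp Hq'.
  by rewrite ltnn.
have Hperm := perm2 pz' qz qp.
set r := rem q (rem p z) in Hperm.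
have Hpz' : forall x, x \in p :: q :: r -> pz x.1 = pz x.2.
  by move=> x; rewrite -(perm_mem Hperm); apply: Hpz.
move: Hn Hsum; rewrite /Dz !(perm_big _ Hperm) /=.
clearbody r; clear Hpz Hnall Hperm pz' qz qp.
case: p Hp Hpz' => m n0; case: q Hq => m' n' /= Hq Hp Hpz'.
have E1 : pz m = pz n0 := Hpz' (m, n0) (mem_head _ _).
have E2 : pz m' = pz n' by apply: (Hpz' (m', n')); rewrite !inE eqxx orbT.
have Hr : forall x, x \in r -> pz x.1 = pz x.2.
  by move=> x xr; apply: Hpz'; rewrite !inE xr !orbT.
have e1 : (sval m a1 + sval m a2 = sval n0 a1 + sval n0 a2)%N := pz_a1 E1.
have e2 : (sval m' a1 + sval m' a2 = sval n' a1 + sval n' a2)%N := pz_a1 E2.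
have Hm : (0 < sval m a1)%N := leq_ltn_trans (leq0n _) Hp.
have Hm' : (0 < sval m' a2)%N := ar1 Hq e2.
pose mm := shiftL m a2 a1; pose mm' := shiftL m' a1 a2.
have Vmm : val mm = shiftf (val m) a2 a1 by rewrite (@shiftL_val m a2 a1) ?(eq_sym a2).
have Vmm' : val mm' = shiftf (val m') a1 a2 by rewrite (@shiftL_val m' a1 a2).
have Vmm1 : sval mm a1 = (sval m a1).-1 by rewrite -[sval mm]/(val mm) Vmm ffunE eqxx.
have Vmm'1 : sval mm' a1 = (sval m' a1).+1.
  by rewrite -[sval mm']/(val mm') Vmm' ffunE eqxx (negbTE Hne).
rewrite !big_cons /= => Hn Hsum.
have HIH := IH ((mm, n0) :: (mm', n') :: r).
rewrite /Dz !big_cons /= Vmm1 Vmm'1 in HIH.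
have {HIH} HIH := HIH (ar2 Hp Hq Hn).
have {HIH} HIH := HIH ltac:(move=> x; rewrite !inE => /orP [/eqP -> /=|/orP [/eqP -> /=|xr]];
  [by rewrite pz_shift21 | by rewrite pz_shift12 | by apply: Hr]).
have {HIH} HIH := HIH (ar3 Hsum Hm).
set P1 := \prod_(j <- r) t j.1 in HIH *.
set P2 := \prod_(j <- r) t j.2 in HIH *.
have -> : (t m * (t m' * P1) - t n0 * (t n' * P2) =
    P1 * (t m * t m' - t mm * t mm') + (t mm * (t mm' * P1) - t n0 * (t n' * P2)))%R.
  by rewrite [P1 * _]mulrC mulrBl -!mulrA addrA subrK.
apply: IA => //; apply: IM; apply: IG.
apply: (HS Hm Hm') => a.
  by rewrite Vmm shiftf_int // eq_sym.
by rewrite Vmm' shiftf_int.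
Qed.
End CombG.

End Main.

Local Close Scope fset_scope.
Lemma prod_const_ord (R : nzRingType) (x : R) n : x ^+ n = \prod_(i < n) x.
Proof.
elim: n => [|k IH]; first by rewrite big_ord0 expr0.
by rewrite big_ord_recr exprSr IH.
Qed.

Lemma sum_const_ord (n c : nat) : (\sum_(i < n) c = n * c)%N.
Proof. by rewrite sum_nat_const card_ord. Qed.

Lemma Icongr2 (R : comNzRingType) (S : R -> Prop) (x x' y y' : R) :
  x = x' -> y = y' -> in_ideal_gen S (x' - y') -> in_ideal_gen S (x - y).
Proof. by move=> -> ->. Qed.

Lemma prod_pairs1 (R : comNzRingType) (T : eqType) (f : T -> R) (z : seq (T * T)) (s : seq T) :
  map fst z = s -> \prod_(x <- s) f x = \prod_(p <- z) f p.1.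
Proof. by move=> <-; rewrite big_map. Qed.

Lemma prod_pairs2 (R : comNzRingType) (T : eqType) (f : T -> R) (z : seq (T * T)) (t : seq T) :
  perm_eq (map snd z) t -> \prod_(x <- t) f x = \prod_(p <- z) f p.2.
Proof. by move=> H; rewrite -(perm_big _ H) big_map. Qed.

Lemma sum_pairs (T : eqType) (g : T -> nat) (z : seq (T * T)) s t :
  map fst z = s -> perm_eq (map snd z) t -> (\sum_(x <- s) g x = \sum_(x <- t) g x)%N ->
  (\sum_(p <- z) g p.1 = \sum_(p <- z) g p.2)%N.
Proof. by move=> <- H; rewrite -(perm_big _ H) !big_map. Qed.

Section Conn.
Variables (V A : finType) (src tgt : A -> V) (theta : V -> int) (a1 a2 : A).
Hypotheses (Hne : a1 != a2) (Hs : src a1 = src a2) (Ht : tgt a1 = tgt a2).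
Local Notation L := (latt src tgt theta).

Lemma sum_sub (F : A -> int) : \sum_(a | a != a2) F a = \sum_(b : arrQ' a2) F (val b).
Proof.
rewrite (reindex_omap (val : arrQ' a2 -> A) insub); last first.
  by move=> i Pi; rewrite insubT.
by apply: eq_bigl => -[i iA] /=; rewrite insubT /= eqxx iA.
Qed.

Lemma piZE (m : {ffun A -> nat}) (b : arrQ' a2) :
  piZ a1 a2 m b = (m (val b) + (if val b == a1 then m a2 else 0))%N.
Proof. by rewrite ffunE. Qed.

Lemma sum_Q' (g : A -> V) (Hg : g a1 = g a2) (m : {ffun A -> nat}) v :
  \sum_(b : arrQ' a2 | g (val b) == v) (piZ a1 a2 m b)%:Z = \sum_(a | g a == v) (m a)%:Z.
Proof.
rewrite big_mkcond [RHS]big_mkcond /=.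
pose X a := if g a == v then (m a)%:Z else 0.
pose Y a := if g a == v then (if a == a1 then (m a2)%:Z else 0) else 0.
rewrite (eq_bigr (fun b : arrQ' a2 => X (val b) + Y (val b))); last first.
  move=> b _; rewrite piZE /X /Y; case: (g _ == v) => //; case: (val b == a1) => /=.
    by rewrite PoszD.
  by rewrite addn0 addr0.
rewrite -(sum_sub (fun a => X a + Y a)) big_split /= [RHS](bigD1 a2) //= addrC; congr (_ + _).
rewrite (bigD1 a1) //= big1 ?addr0; last first.
  by move=> a /andP [_ ne]; rewrite /Y (negbTE ne); case: (g a == v).
by rewrite /X /Y eqxx Hg.
Qed.

Lemma piZ_nabla (x : L) : in_nabla (srcQ' src (alpha2:=a2)) (tgtQ' tgt (alpha2:=a2)) theta (piZ a1 a2 (val x)).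
Proof.
apply/forallP => v; have /forallP /(_ v) := valP x.
by rewrite /srcQ' /tgtQ' !sum_Q'.
Qed.

Definition piL (x : L) : latt (srcQ' src (alpha2:=a2)) (tgtQ' tgt (alpha2:=a2)) theta :=
  Sub (piZ a1 a2 (val x)) (piZ_nabla x).

Lemma pi_varE (x : L) : pi_var a1 a2 x = tvar (piL x).
Proof. by rewrite /pi_var (insubT _ (piZ_nabla x)). Qed.


Lemma tmon_eq (u : {cmonom L}) s : u = \big[mmul/mone]_(x <- s) ucm x ->
  tmon u = \prod_(x <- s) tvar x.
Proof.
move=> ->; rewrite /tmon.
by rewrite (big_morph (fun k : {cmonom L} => (<< k >> : Fring src tgt theta)) (@monoM _ _) (@mono1 _ _)).
Qed.

Definition Kx (m : {ffun A -> nat}) : {cmonom A} :=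
  \big[mmul/mone]_(a : A) \big[mmul/mone]_(i < m a) ucm a.

Lemma xmon_eq m : xmon m = << Kx m >>.
Proof.
rewrite /xmon /Kx (big_morph (fun k : {cmonom A} => (<< k >> : Xring A)) (@monoM _ _) (@mono1 _ _)).
apply: eq_bigr => a _.
rewrite (big_morph (fun k : {cmonom A} => (<< k >> : Xring A)) (@monoM _ _) (@mono1 _ _)).
exact (prod_const_ord _ _).
Qed.

Lemma Kx_a (m : {ffun A -> nat}) b : Kx m b = m b.
Proof.
rewrite /Kx !(big_morph (fun k : {cmonom A} => k b) (cmM b) (cm1 b)).
rewrite (eq_bigr (fun a => m a * (a == b))%N); last first.
  move=> a _; rewrite (big_morph (fun k : {cmonom A} => k b) (cmM b) (cm1 b)).
  rewrite (eq_bigr (fun _ => (a == b) : nat)); last by move=> i _; rewrite cmU.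
  exact: sum_const_ord.
rewrite (bigD1 b) //= eqxx muln1 big1 ?addn0 // => a ne; by rewrite (negbTE ne) muln0.
Qed.

Lemma phi_tmon (u : {cmonom L}) s : u = \big[mmul/mone]_(x <- s) ucm x ->
  phi (tmon u) = << \big[mmul/mone]_(x <- s) Kx (val x) >>.
Proof.
move=> Hu.
have -> : phi (tmon u) = @gw _ _ (fun m : L => xmon (val m)) u.
  rewrite /phi /tmon mmapU; exact: mul1r.
rewrite Hu gw_prod (big_morph (fun k : {cmonom A} => (<< k >> : Xring A)) (@monoM _ _) (@mono1 _ _)).
by apply: eq_bigr => x _; rewrite xmon_eq.
Qed.

Lemma phi_sum (s : seq L) : (\big[mmul/mone]_(x <- s) Kx (val x)) a1 = (\sum_(x <- s) val x a1)%N.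
Proof.
rewrite (big_morph (fun k : {cmonom A} => k a1) (cmM a1) (cm1 a1)).
by apply: eq_bigr => x _; rewrite Kx_a.
Qed.

Lemma piF_tmon (u : {cmonom L}) s : u = \big[mmul/mone]_(x <- s) ucm x ->
  piF a1 a2 (tmon u) = << \big[mmul/mone]_(x <- s) ucm (piL x) >>.
Proof.
move=> Hu.
have -> : piF a1 a2 (tmon u) = @gw _ _ (pi_var a1 a2 (theta:=theta)) u.
  rewrite /piF /tmon mmapU; exact: mul1r.
rewrite Hu gw_prod (big_morph (fun k : {cmonom _} => (<< k >> : Fring' src tgt a2 theta)) (@monoM _ _) (@mono1 _ _)).
by apply: eq_bigr => x _; rewrite pi_varE.
Qed.

Lemma cnt (s : seq L) y : (\big[mmul/mone]_(x <- s) ucm (piL x)) y = count_mem y (map piL s).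
Proof.
elim: s => [|x s IH]; first by rewrite big_nil cm1.
by rewrite big_cons cmM IH cmU /= eq_sym.
Qed.

Lemma perm_of (s t : seq L) :
  \big[mmul/mone]_(x <- s) ucm (piL x) = \big[mmul/mone]_(x <- t) ucm (piL x) ->
  perm_eq (map piL s) (map piL t).
Proof.
move=> E; rewrite /perm_eq; apply/allP => y _ /=.
by rewrite -!cnt E.
Qed.

Lemma HS_G2 : forall m n m' n' : L, (0 < val m a1)%N -> (0 < val n a2)%N ->
  (forall a, (val m' a)%:Z = (val m a)%:Z + eps a2 a - eps a1 a) ->
  (forall a, (val n' a)%:Z = (val n a)%:Z + eps a1 a - eps a2 a) ->
  @G2 V A src tgt a1 a2 theta (tvar m * tvar n - tvar m' * tvar n').
Proof.
intros m n m' n' H1 H2 H3 H4. exists m, n, m', n'.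
split; [exact H1|exact H2|exact H3|exact H4|reflexivity].
Qed.

Lemma main_sec (u v : {cmonom L}) : phi (tmon u) = phi (tmon v) ->
  piF a1 a2 (tmon u) = piF a1 a2 (tmon v) ->
  in_ideal_gen (@G2 V A src tgt a1 a2 theta) (tmon u - tmon v).
Proof.
move=> Hphi Hpi.
have [su Hu] := cmonom_dec _ u.
have [sv Hv] := cmonom_dec _ v.
have K1 := mono_inj _ _ _ _ (etrans (esym (phi_tmon Hu)) (etrans Hphi (phi_tmon Hv))).
have Hs1 : (\sum_(x <- su) val x a1 = \sum_(x <- sv) val x a1)%N.
  by rewrite -!phi_sum K1.
have K2 := mono_inj _ _ _ _ (etrans (esym (piF_tmon Hu)) (etrans Hpi (piF_tmon Hv))).
have [z [Hz1 Hz2 Hz3]] := @pairing _ _ _ _ _ (perm_of K2).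
have Eu := etrans (tmon_eq Hu) (prod_pairs1 (@tvar V A src tgt theta) Hz1).
have Ev := etrans (tmon_eq Hv) (prod_pairs2 (@tvar V A src tgt theta) Hz2).
have Hpz : forall p, p \in z -> pz a1 a2 p.1 = pz a1 a2 p.2.
  by move=> p pin; exact: (congr1 val (Hz3 p pin)).
have Hsum : (\sum_(p <- z) val p.1 a1 = \sum_(p <- z) val p.2 a1)%N :=
  sum_pairs (g := fun x : L => val x a1) Hz1 Hz2 Hs1.
exact (Icongr2 Eu Ev (comb Hne Hs Ht HS_G2 Hpz Hsum)).
Qed.

End Conn.

Unset Implicit Arguments.
Local Open Scope ring_scope.

Theorem lemma9p5 (V A : finType) (src tgt : A -> V) (theta : V -> int)
    (alpha1 alpha2 : A) :
  no_oriented_cycles src tgt ->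
  alpha1 != alpha2 ->
  src alpha1 = src alpha2 ->
  tgt alpha1 = tgt alpha2 ->
  forall u v : {cmonom latt src tgt theta},
    phi (tmon u) = phi (tmon v) ->
    @piF V A src tgt alpha1 alpha2 theta (tmon u) =
      @piF V A src tgt alpha1 alpha2 theta (tmon v) ->
    in_ideal_gen (@G2 V A src tgt alpha1 alpha2 theta) (tmon u - tmon v).
Proof.
intros _ Hne Hs Ht u v Hphi Hpi.
exact (main_sec Hne Hs Ht Hphi Hpi).
Qed.
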